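(* Let $(X,d_X)$ be a discrete countable metric space and $A\subset X$ nonempty. Let $X_0,X_1$ be two copies of $X$ (the copy of $x\in X$ in $X_i$ denoted $x_i$), and define the metric $d^A$ on $X_0\sqcup X_1$ by $d^A(x_i,y_i)=d_X(x,y)$ for $i=0,1$ and $d^A(x_0,y_1)=\inf_{z\in A}[d_X(x,z)+d_X(y,z)+1]$. Identifying $\mathbb B(H_{X_0},H_{X_1})$ with $\mathbb B(H_X)$, the module $M_{X_1,d^A}$ (with $X_0$ playing the role of $X$) coincides with the norm closure in $\mathbb B(H_X)$ of $\bigcup_{k=1}^\infty C^*_u(N_k(A))$, where $N_k(A)=\{x\in X: d_X(x,A)\le k\}$ carries the restricted metric and each $T\in C^*_u(N_k(A))\subset\mathbb B(H_{N_k(A)})$ is regarded as the operator on $H_X$ equal to $T$ on $H_{N_k(A)}=\ell^2(N_k(A))$ and $0$ on its orthogonal complement.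
   Context: $H_Z=\ell^2(Z)$ with standard basis $\{\delta_z\}$. For a metric space $(Z,d_Z)$, $C^*_u(Z)$ is the norm closure in $\mathbb B(H_Z)$ of bounded operators of finite propagation ($T$ has propagation at most $L$ if $d_Z(z,z')\ge L$ implies $(\delta_z,T\delta_{z'})=0$). For a metric $d$ on $X\sqcup Y$ extending $d_X$, $M_{Y,d}$ is the norm closure in $\mathbb B(H_X,H_Y)$ of the bounded operators $T:H_X\to H_Y$ of finite propagation (i.e. there is $L$ with $(\delta_y,T\delta_x)=0$ whenever $d(x,y)\ge L$). *)

(* Defs.v *)
From mathcomp Require Import all_boot all_algebra.
From mathcomp Require Import all_classical all_reals.
From mathcomp Require Import Rstruct complex.
From Stdlib Require Import Reals.
Import GRing.Theory Num.Theory.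

Set Implicit Arguments.
Unset Strict Implicit.
Unset Printing Implicit Defensive.

Local Open Scope ring_scope.
Local Open Scope classical_set_scope.

Definition sqmod (z : R[i]) : R := match z with Complex a b => a ^+ 2 + b ^+ 2 end.

(* A (bounded) operator T : l^2(X) -> l^2(Y) is represented by its matrix
   K y x = (delta_y, T delta_x). *)
Definition kernel (Y X : Type) := Y -> X -> R[i].

Definition ksub (Y X : Type) (K1 K2 : kernel Y X) : kernel Y X :=
  fun y x => K1 y x - K2 y x.

(* squared operator norm of the compression of K to the finite sets
   G (domain) and F (codomain) *)
Definition cnorm2 (Y X : eqType) (K : kernel Y X) (F : seq Y) (G : seq X) : R :=
  sup [set (\sum_(y <- undup F) sqmod (\sum_(x <- undup G) K y x * v x))
      | v in [set v : X -> R[i] | \sum_(x <- undup G) sqmod (v x) <= 1]].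

Definition bounded (Y X : eqType) (K : kernel Y X) : Prop :=
  exists M : R, forall F G, cnorm2 K F G <= M.

Definition opnorm2 (Y X : eqType) (K : kernel Y X) : R :=
  sup [set r | exists F G, r = cnorm2 K F G].

Definition nclosure (Y X : eqType) (S : set (kernel Y X)) : set (kernel Y X) :=
  [set K | bounded K /\
     forall e : R, 0 < e -> exists2 K', S K' & opnorm2 (ksub K' K) < e].

Definition is_metric (X : Type) (d : X -> X -> R) : Prop :=
  [/\ forall x y, 0 <= d x y,
      forall x y, d x y = 0 <-> x = y,
      forall x y, d x y = d y x &
      forall x y z, d x z <= d x y + d y z].

Definition discrete_metric (X : Type) (d : X -> X -> R) : Prop :=
  forall x, exists2 e : R, 0 < e & forall y, d x y < e -> y = x.

(* the metric d^A on X_0 |_| X_1 = X + X (inl x = x_0, inr x = x_1) *)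
Definition dA (X : Type) (d : X -> X -> R) (A : set X) (p q : X + X) : R :=
  match p, q with
  | inl x, inl y => d x y
  | inr x, inr y => d x y
  | inl x, inr y => inf [set d x z + d y z + 1 | z in A]
  | inr y, inl x => inf [set d x z + d y z + 1 | z in A]
  end.

(* finite propagation for T : H_{X_0} -> H_{X_1} w.r.t. a metric dd on
   X_0 |_| X_1; K y x = (delta_{y_1}, T delta_{x_0}) *)
Definition finprop_mod (X : eqType) (dd : X + X -> X + X -> R) (K : kernel X X) : Prop :=
  exists L : R, forall x y, L <= dd (inl x) (inr y) -> K y x = 0.

(* M_{X_1, dd}, with B(H_{X_0}, H_{X_1}) identified with B(H_X) *)
Definition Mmod (X : eqType) (dd : X + X -> X + X -> R) : set (kernel X X) :=
  nclosure [set K | bounded K /\ finprop_mod dd K].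

Definition finprop (X : eqType) (d : X -> X -> R) (K : kernel X X) : Prop :=
  exists L : R, forall z z', L <= d z z' -> K z z' = 0.

(* K vanishes outside Z x Z, i.e. K is an operator on l^2(Z) extended by 0 *)
Definition supported_in (X : Type) (Z : set X) (K : kernel X X) : Prop :=
  forall y x, K y x <> 0 -> Z y /\ Z x.

(* C^*_u(Z) for Z subset X with the restricted metric, viewed inside B(H_X) *)
Definition Cu (X : eqType) (d : X -> X -> R) (Z : set X) : set (kernel X X) :=
  nclosure [set K | bounded K /\ supported_in Z K /\ finprop d K].

Definition Nk (X : Type) (d : X -> X -> R) (A : set X) (k : nat) : set X :=
  [set x | inf [set d x z | z in A] <= k%:R].

(* Main.v *)
Require Import Defs.
From mathcomp Require Import all_boot all_algebra.
From mathcomp Require Import all_classical all_reals.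
From mathcomp Require Import Rstruct complex.
From Stdlib Require Import Reals.
From mathcomp Require Import ring lra.
Import GRing.Theory Num.Theory order.Order.TTheory.

Section Aux.
Local Open Scope ring_scope.
Local Open Scope classical_set_scope.

Lemma auxD (T : realFieldType) (a b c e : T) :
  (a+c)*(a+c)+(b+e)*(b+e) <= 2*(a*a+b*b)+2*(c*c+e*e).
Proof.
have h : 2 * (a*a+b*b) + 2*(c*c+e*e) - ((a+c)*(a+c)+(b+e)*(b+e)) = (a-c)*(a-c)+(b-e)*(b-e) by ring.
by rewrite -subr_ge0 h; apply: addr_ge0; rewrite -expr2 sqr_ge0.
Qed.

Ltac sqs := simpl; rewrite ?RplusE ?RmultE ?RoppE ?RminusE ?expr2.

Lemma sqmod_ge0 z : 0 <= sqmod z.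
Proof. case: z => a b; sqs. nra. Qed.

Lemma sqmodD z w : sqmod (z + w) <= 2 * sqmod z + 2 * sqmod w.
Proof.
case: z => a b; case: w => c e; sqs. exact: auxD.
Qed.

Lemma sqmodN z : sqmod (- z) = sqmod z.
Proof. case: z => a b; sqs. ring. Qed.

Lemma sqmodB z w : sqmod (z - w) <= 2 * sqmod z + 2 * sqmod w.
Proof. by rewrite -(sqmodN w); apply: sqmodD. Qed.

Lemma sqmodM z w : sqmod (z * w) = sqmod z * sqmod w.
Proof. case: z => a b; case: w => c e; sqs. ring. Qed.

Lemma sqmod0 : sqmod 0 = 0.
Proof. sqs. ring. Qed.
End Aux.

Section Norms.
Local Open Scope ring_scope.
Local Open Scope classical_set_scope.
Variables Y X : eqType.

Definition bnd (f : X -> R) (s : seq X) : R := foldr (fun x acc => 2 * f x + 2 * acc) 0 s.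

Lemma sqmod_sum_le (g : X -> R[i]) (f : X -> R) s :
  (forall x, x \in s -> sqmod (g x) <= f x) -> sqmod (\sum_(x <- s) g x) <= bnd f s.
Proof.
elim: s => [|a s IH] h; first by rewrite big_nil sqmod0.
rewrite big_cons /=.
have h1 := sqmodD (g a) (\sum_(x <- s) g x).
have h2 : sqmod (g a) <= f a by apply: h; rewrite inE eqxx.
have h3 : sqmod (\sum_(x <- s) g x) <= bnd f s.
  by apply: IH => x xs; apply: h; rewrite inE xs orbT.
lra.
Qed.

Lemma le_sum_one (f : X -> R) s x : x \in s -> (forall y, 0 <= f y) ->
  f x <= \sum_(y <- s) f y.
Proof.
move=> xs h; rewrite (big_rem x) //=.
have : 0 <= \sum_(y <- rem x s) f y by apply: sumr_ge0.
lra.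
Qed.

Definition cset (K : kernel Y X) F G := [set (\sum_(y <- undup F) sqmod (\sum_(x <- undup G) K y x * v x))
      | v in [set v : X -> R[i] | \sum_(x <- undup G) sqmod (v x) <= 1]].

Lemma cset_sup (K : kernel Y X) F G : has_sup (cset K F G).
Proof.
split.
  exists (\sum_(y <- undup F) sqmod (\sum_(x <- undup G) K y x * (fun _ => 0) x)).
  exists (fun _ => 0); last by [].
  change (\sum_(x <- undup G) sqmod ((fun _ : X => (0:R[i])) x) <= 1).
  by rewrite big1 ?ler01 // => x _; exact: sqmod0.
exists (\sum_(y <- undup F) bnd (fun x => sqmod (K y x)) (undup G)).
move=> _ [v hv <-]; apply: ler_sum => y _; apply: sqmod_sum_le => x xG.
rewrite sqmodM.
have h1 : sqmod (v x) <= 1.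
  apply: le_trans hv; apply: (le_sum_one (fun x => sqmod (v x))) => //.
  by move=> z; apply: sqmod_ge0.
have h2 := sqmod_ge0 (K y x); have h3 := sqmod_ge0 (v x).
nra.
Qed.

Lemma cnorm2_ub (K : kernel Y X) F G (v : X -> R[i]) : \sum_(x <- undup G) sqmod (v x) <= 1 ->
  \sum_(y <- undup F) sqmod (\sum_(x <- undup G) K y x * v x) <= cnorm2 K F G.
Proof. by move=> hv; apply: (sup_upper_bound (cset_sup K F G)); exists v. Qed.

Lemma cnorm2_le (K : kernel Y X) F G M :
  (forall v : X -> R[i], \sum_(x <- undup G) sqmod (v x) <= 1 ->
    \sum_(y <- undup F) sqmod (\sum_(x <- undup G) K y x * v x) <= M) ->
  cnorm2 K F G <= M.
Proof.
move=> h; apply: ge_sup; first by case: (cset_sup K F G).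
by move=> _ [v hv <-]; apply: h.
Qed.

Lemma cnorm2_sub (K K1 K2 : kernel Y X) F G :
  (forall y x, K y x = K1 y x - K2 y x) ->
  cnorm2 K F G <= 2 * cnorm2 K1 F G + 2 * cnorm2 K2 F G.
Proof.
move=> hK; apply: cnorm2_le => v hv.
have e : forall y, \sum_(x <- undup G) K y x * v x =
   \sum_(x <- undup G) K1 y x * v x - \sum_(x <- undup G) K2 y x * v x.
  by move=> y; rewrite -sumrB; apply: eq_bigr => x _; rewrite hK mulrBl.
apply: (@le_trans _ _ (\sum_(y <- undup F) (2 * sqmod (\sum_(x <- undup G) K1 y x * v x)
   + 2 * sqmod (\sum_(x <- undup G) K2 y x * v x)))).
  by apply: ler_sum => y _; rewrite e; apply: sqmodB.
rewrite big_split /= -!mulr_sumr.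
have := cnorm2_ub K1 F G v hv; have := cnorm2_ub K2 F G v hv.
lra.
Qed.

Lemma cnorm2_zero (K : kernel Y X) F G : (forall y x, K y x = 0) -> cnorm2 K F G <= 0.
Proof.
move=> hK; apply: cnorm2_le => v hv.
rewrite big1 // => y _; rewrite big1 ?sqmod0 // => x _.
by rewrite hK mul0r.
Qed.

Lemma cnorm2_le_op (K : kernel Y X) F G : Defs.bounded K -> cnorm2 K F G <= opnorm2 K.
Proof.
move=> [M hM]; apply: (sup_upper_bound); last by exists F, G.
split; first by exists (cnorm2 K F G); exists F, G.
by exists M => _ [F' [G' ->]].
Qed.

Lemma opnorm2_le (K : kernel Y X) M : (forall F G, cnorm2 K F G <= M) -> opnorm2 K <= M.
Proof.
move=> h; apply: ge_sup; first by exists (cnorm2 K [::] [::]); exists [::], [::].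
by move=> _ [F' [G' ->]].
Qed.

Lemma bounded_sub (K1 K2 : kernel Y X) : Defs.bounded K1 -> Defs.bounded K2 -> Defs.bounded (ksub K1 K2).
Proof.
move=> [M1 h1] [M2 h2]; exists (2 * M1 + 2 * M2) => F G.
have := @cnorm2_sub (ksub K1 K2) K1 K2 F G (fun y x => erefl (ksub K1 K2 y x)).
have := h1 F G; have := h2 F G. lra.
Qed.

End Norms.

Section Geo.
Local Open Scope ring_scope.
Local Open Scope classical_set_scope.
Variables (X : countType) (d : X -> X -> R) (A : set X).
Hypothesis hd : is_metric d.
Hypothesis hA : A !=set0.

Lemma d_ge0 x y : 0 <= d x y. Proof. by case: hd. Qed.
Lemma d_sym x y : d x y = d y x. Proof. by case: hd. Qed.
Lemma d_tri x y z : d x z <= d x y + d y z. Proof. by case: hd. Qed.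

Lemma inf2_le x y z : A z -> inf [set d x z + d y z + 1 | z in A] <= d x z + d y z + 1.
Proof.
move=> Az; apply: ge_inf; last by exists z.
exists 0 => _ [w _ <-]; have := d_ge0 x w; have := d_ge0 y w; lra.
Qed.

Lemma inf1_le x z : A z -> inf [set d x z | z in A] <= d x z.
Proof.
move=> Az; apply: ge_inf; last by exists z.
by exists 0 => _ [w _ <-]; apply: d_ge0.
Qed.


Lemma near_of L x y : ~ (L <= dA d A (inl x) (inr y)) ->
  exists2 z, A z & d x z + d y z + 1 < L.
Proof.
move=> h; apply: contra_notP h => h; rewrite /=.
apply: lb_le_inf.
  by case: hA => z Az; exists (d x z + d y z + 1); exists z.
move=> _ [z Az <-]; rewrite leNgt; apply/negP => hz; apply: h; by exists z.
Qed.

Lemma dir1 (K : kernel X X) : Defs.bounded K -> finprop_mod (dA d A) K ->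
  exists2 k : nat, leq 1 k & Cu d (Nk d A k) K.
Proof.
move=> hb [L hL].
have hn : forall x y, K y x <> 0 -> exists2 z, A z & d x z + d y z + 1 < L.
  by move=> x y hK; apply: near_of => hle; apply: hK; apply: hL.
set k := (Num.bound `|L|).+1.
have hLk : L < k%:R.
  have := archi_boundP (normr_ge0 L); have := ler_norm L.
  rewrite /k -addn1 natrD; lra.
exists k => //; split => // e e0; exists K; last first.
  apply: (@le_lt_trans _ _ 0) => //; apply: opnorm2_le => F G.
  by apply: cnorm2_zero => y x; rewrite /ksub subrr.
split => //; split.
  move=> y x /(hn x y) [z Az hz]; rewrite /Nk /=; split.
    have := inf1_le y z Az; have := d_ge0 x z; lra.
  have := inf1_le x z Az; have := d_ge0 y z; lra.
exists L => y x hle; case: (eqVneq (K y x) 0) => // /eqP hK.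
have [z Az hz] := hn x y hK; exfalso.
have := d_tri y z x; rewrite (d_sym z x); clear hK hn hL; lra.
Qed.

Lemma dir2 (K : kernel X X) (k : nat) : supported_in (Nk d A k) K -> finprop d K ->
  finprop_mod (dA d A) K.
Proof.
move=> hs [L hL]; exists (2 * k%:R + L + 3) => x y hle.
case: (eqVneq (K y x) 0) => // /eqP hK; exfalso; rewrite /= in hle.
have [_ hNx] := hs y x hK.
have [r [z Az <-] hz] : exists2 r, [set d x z | z in A] r & r < k%:R + 1.
  apply: inf_lt; first by case: hA => z Az; exists (d x z), z.
  rewrite /Nk /= in hNx; lra.
have hyx : d y x < L.
  by rewrite ltNge; apply/negP => /hL.
have := inf2_le x y z Az; have := d_tri y x z; rewrite /= => h1 h2.
clear hK hs hL hNx; lra.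
Qed.


Lemma incl1 : Mmod (dA d A) `<=` nclosure (\bigcup_(k in [set k : nat | leq 1 k]) Cu d (Nk d A k)).
Proof.
move=> K [hb hK]; split => // e e0.
have [K' [hb' hf'] hK'e] := hK e e0; exists K' => //.
have [k k0 hk] := dir1 K' hb' hf'; by exists k.
Qed.

Lemma incl2 : nclosure (\bigcup_(k in [set k : nat | leq 1 k]) Cu d (Nk d A k)) `<=` Mmod (dA d A).
Proof.
move=> K [hb hK]; split => // e e0.
have e8 : 0 < e / 8 by lra.
have [K' [k _ [hb' hK']] hK'e] := hK _ e8.
have [K'' [hb'' [hs hf]] hK''e] := hK' _ e8.
exists K''; first by split => //; apply: (dir2 K'' k hs hf).
apply: (@le_lt_trans _ _ (e * 6 / 8)); last by lra.
apply: opnorm2_le => F G.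
have h1 := @cnorm2_sub _ _ (ksub K'' K) (ksub K'' K') (ksub K K') F G
  (fun y x => ltac:(rewrite /ksub; ring)).
have h2 := @cnorm2_sub _ _ (ksub K K') (fun _ _ => 0) (ksub K' K) F G
  (fun y x => ltac:(rewrite /ksub; ring)).
have h3 := @cnorm2_zero _ _ (fun _ _ => 0) F G (fun _ _ => erefl).
have h4 := @cnorm2_le_op _ _ _ F G (@bounded_sub _ _ _ _ hb'' hb').
have h5 := @cnorm2_le_op _ _ _ F G (@bounded_sub _ _ _ _ hb' hb).
lra.
Qed.

End Geo.

Local Open Scope classical_set_scope.

Theorem mainTheorem6 (X : countType) (d : X -> X -> R) (A : set X)
  (hd : is_metric d) (hdisc : discrete_metric d) (hA : A !=set0) :
  Mmod (dA d A) = nclosure (\bigcup_(k in [set k : nat | (0 < k)%N]) Cu d (Nk d A k)).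
Proof.
rewrite eqEsubset; split; [exact: incl1 | exact: incl2].
Qed.
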